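(* Let $q=p^n$ be odd, let $k\neq 0$ be a positive integer, and let $f(x)=ax^{p^k+1}+dx^{p^k}+bx+c\in\mathbb{F}_q[x]$. If $f(x)=g(x)^2$ for some polynomial $g$, then either $d^{p^k}a=ba^{p^k}$ and $d^{p^k+1}a=ca^{p^k+1}$, or $a=b=d=0$. *)

(* Defs.v *)
From mathcomp Require Import all_boot all_algebra all_field.

(* Main.v *)
Require Import Defs.
From mathcomp Require Import all_boot all_algebra all_field.
From mathcomp Require Import zify ring.
Import GRing.Theory.
Local Open Scope ring_scope.

Lemma size_coefE (F : fieldType) (p : {poly F}) (n : nat) :
  (forall i, (n < i)%N -> p`_i = 0) -> p`_n != 0 -> size p = n.+1.
Proof.
move=> H0 Hn; apply/anti_leq/andP; split.
  rewrite leqNgt; apply/negP => Hs.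
  have pn0 : p != 0 by apply: contra Hn => /eqP ->; rewrite coef0.
  have := lead_coef_eq0 p; rewrite (negbTE pn0) /lead_coef H0 ?eqxx //.
  by rewrite -ltnS prednK // (leq_ltn_trans _ Hs).
rewrite ltnNge; apply/negP => Hs; move/negP: Hn; apply; apply/eqP.
exact: nth_default.
Qed.

Lemma key (F : fieldType) (g : {poly F}) (m : nat) (A B C : F) :
  (2 <= m)%N -> A != 0 -> (2%:R : F) != 0 ->
  g ^+ 2 = A *: 'X^(m.*2) + B *: 'X + C%:P -> B = 0 /\ C = 0.
Proof.
move=> hm hA h2 E.
have Hc : forall i, (g ^+ 2)`_i = A * (i == m.*2)%:R + B * (i == 1%N)%:R + (if i == 0%N then C else 0).
  by move=> i; rewrite E !coefE.
have gn0 : g != 0.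
  apply: contra hA => /eqP g0; have := Hc m.*2; rewrite g0 expr0n /= coef0 eqxx mulr1.
  have -> : (m.*2 == 1%N) = false by apply/negbTE; lia.
  have -> : (m.*2 == 0%N) = false by apply/negbTE; lia.
  by rewrite mulr0 !addr0 => <-.
have s2 : size (g ^+ 2) = (m.*2).+1.
  apply: size_coefE.
    move=> i hi; rewrite Hc.
    have -> : (i == m.*2) = false by rewrite gtn_eqF.
    have -> : (i == 1%N) = false by apply/negbTE; lia.
    have -> : (i == 0%N) = false by apply/negbTE; lia.
    by rewrite !mulr0 !addr0.
  rewrite Hc eqxx mulr1.
  have -> : (m.*2 == 1%N) = false by apply/negbTE; lia.
  have -> : (m.*2 == 0%N) = false by apply/negbTE; lia.
  by rewrite mulr0 !addr0.
have sg : size g = m.+1.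
  have := size_exp g 2; rewrite s2 /= => h.
  have hg : (size g).-1 = m by apply: double_inj; rewrite h muln2.
  by rewrite -hg prednK // size_poly_gt0.
set q := drop_poly m g; set r := take_poly m g.
have sq : size q = 1%N by rewrite size_drop_poly sg subSnn.
have qE : q = (q`_0)%:P by apply: size1_polyC; rewrite sq.
have q0 : q`_0 != 0.
  have := lead_coef_eq0 q; rewrite /lead_coef sq /= => ->.
  by rewrite -size_poly_eq0 sq.
have gE : g = r + (q`_0)%:P * 'X^m by rewrite -qE poly_take_drop.
have sr : (size r <= m)%N := size_take_poly m g.
have r0 : r = 0.
  apply/eqP; apply/negPn/negP => rn0.
  set s := (size r).-1.
  have ss : (s < m)%N by rewrite /s prednK // size_poly_gt0.
  have := Hc (m + s)%N.
  rewrite gE.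
  have -> : (r + (q`_0)%:P * 'X^m) ^+ 2 = r * r + (2%:R * q`_0) *: (r * 'X^m) + (q`_0 ^+ 2) *: 'X^(m.*2).
    rewrite -!mul_polyC rmorphM rmorphXn /= -addnn exprD; rewrite polyC_natr; ring.
  have rr : (r * r)`_(m + s) = 0.
    apply: nth_default; apply: leq_trans (size_polyMleq r r) _.
    rewrite /s in ss *; move: ss; case: (size r) => //= t; lia.
  rewrite !coefD rr !coefZ coefMXn coefXn.
  have -> : (m + s < m)%N = false by lia.
  have -> : (m + s == m.*2) = false by apply/negbTE; rewrite -addnn; lia.
  have -> : (m + s == 1)%N = false by apply/negbTE; lia.
  have -> : (m + s == 0)%N = false by apply/negbTE; lia.
  rewrite addKn !mulr0 !addr0 add0r => /eqP.
  rewrite !mulf_eq0 (negbTE h2) (negbTE q0) /=.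
  have := lead_coef_eq0 r; rewrite /lead_coef -/s => ->; exact/negP.
move: Hc; rewrite gE r0 add0r exprMn -rmorphXn -exprM muln2 => Hc.
split.
  have := Hc 1%N; rewrite coefCM coefXn.
  have -> : (1 == m.*2)%N = false by apply/negbTE; lia.
  by rewrite /= !mulr0 mulr1 !addr0 add0r => <-.
have := Hc 0%N; rewrite coefCM coefXn.
  have -> : (0 == m.*2)%N = false by apply/negbTE; lia.
  by rewrite /= !mulr0 !addr0 !add0r => <-.
Qed.

Lemma nosq_odd (F : fieldType) (g : {poly F}) (n : nat) :
  size (g ^+ 2) = n.+1 -> odd n -> False.
Proof.
have [->|gn0] := eqVneq g 0; first by rewrite expr0n /= size_poly0.
have := size_exp g 2 => h hs; rewrite hs /= in h; rewrite h.
by rewrite muln2 odd_double.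
Qed.

Theorem lemma1 (F : finFieldType) (p n k : nat)
  (hp : prime p) (hodd : odd p) (hchar : p \in [pchar F])
  (hcard : #|F| = (p ^ n)%N) (hk : (0 < k)%N)
  (a b c d : F) (g : {poly F}) :
  a *: 'X^((p ^ k).+1) + d *: 'X^(p ^ k) + b *: 'X + c%:P = g ^+ 2 ->
  (d ^+ (p ^ k) * a = b * a ^+ (p ^ k) /\
   d ^+ ((p ^ k).+1) * a = c * a ^+ ((p ^ k).+1))
  \/ (a = 0 /\ b = 0 /\ d = 0).
Proof.
move=> E.
set P := (p ^ k)%N in E *.
have oP : odd P by rewrite /P oddX hodd orbT.
have p3 : (3 <= p)%N.
  have := prime_gt1 hp; case: p hodd {hchar hcard P oP hp E} => // -[|[]] //.
have P3 : (3 <= P)%N.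
  rewrite /P; move: hk; case: (k) => // k0 _; rewrite expnS; apply: leq_trans p3 (leq_pmulr _ _); by rewrite expn_gt0 prime_gt0.
have h2 : (2%:R : F) != 0.
  rewrite -(dvdn_pcharf hchar); apply/negP => /dvdn_leq H; have := H isT; lia.
have [a0|an0] := eqVneq a 0.
  right; split => //.
  rewrite a0 scale0r add0r in E.
  have [d0|dn0] := eqVneq d 0.
    split => //.
    rewrite d0 scale0r add0r in E.
    have [//|bn0] := eqVneq b 0.
    exfalso; apply: (@nosq_odd _ g 1) => //.
    rewrite -E; apply: size_coefE.
      move=> i hi; rewrite !coefE; have -> : (i == 1%N) = false by apply/negbTE; lia.
      have -> : (i == 0%N) = false by apply/negbTE; lia.
      by rewrite mulr0 addr0.
    by rewrite !coefE /= addr0 mulr1.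

  exfalso; apply: (@nosq_odd _ g P) => //.
  rewrite -E; apply: size_coefE.
    move=> i hi; rewrite !coefE.
    have -> : (i == P) = false by apply/negbTE; lia.
    have -> : (i == 1%N) = false by apply/negbTE; lia.
    have -> : (i == 0%N) = false by apply/negbTE; lia.
    by rewrite !mulr0 !addr0.
  rewrite !coefE eqxx.
  have -> : (P == 1%N) = false by apply/negbTE; lia.
  have -> : (P == 0%N) = false by apply/negbTE; lia.
  by rewrite mulr1 mulr0 !addr0.
left.
have [e hd] : exists e, d = - (a * e) by exists (- (d / a)); field.
subst d.
set u := 'X + e%:P.
have Pn : [pchar {poly F}].-nat P.
  by rewrite /P pnatX (pnatE _ hp) pchar_poly hchar.
have uP : u ^+ P = 'X^P + (e ^+ P)%:P by rewrite /u exprDn_pchar // rmorphXn.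
have := congr1 (fun q => q \Po u) E => /=.
rewrite comp_polyM !comp_polyD !comp_polyZ !comp_Xn_poly comp_polyX comp_polyC.
rewrite exprSr uP.
have -> : a *: (('X^P + (e ^+ P)%:P) * u) + - (a * e) *: ('X^P + (e ^+ P)%:P) + b *: u + c%:P
   = a *: 'X^(P.+1) + (a * e ^+ P + b) *: 'X + (b * e + c)%:P.
  rewrite /u exprSr -!mul_polyC !rmorphD !rmorphM rmorphN /=; ring.
have m2 : P.+1 = (uphalf P).*2.
  rewrite uphalf_half oP -addnn; have := odd_double_half P; rewrite oP -addnn /=; lia.
move=> /esym H; rewrite m2 in H.
have hm : (2 <= uphalf P)%N.
  rewrite uphalf_half oP; have := odd_double_half P; rewrite oP -addnn /=; lia.
have [/eqP hb /eqP hc] := @key _ (g \Po u) (uphalf P) _ _ _ hm an0 h2 (etrans (esym (expr2 _)) H).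

have hb' : b = - (a * e ^+ P) by apply/eqP; rewrite -addr_eq0 addrC hb.
have hc' : c = - (b * e) by apply/eqP; rewrite -addr_eq0 addrC hc.
subst c; subst b.
clearbody P.
have sP : (-1 : F) ^+ P = -1 by rewrite -signr_odd oP.
rewrite !exprSr (exprNn (a * e)) sP exprMn; split; ring.
Qed.
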